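(* Let $w$ be a planar word in $\Sigma_{0,1,n}$ and let $k\in\{1,\dots,n\}$. Then: (i) $w$ is squarefree, i.e. its reduced word has no two consecutive equal letters; (ii) $w\notin(\overline t_n\overline t_{n-1}\cdots\overline t_{k+1}t_k{\star})\setminus\{(t_{k+1}\cdots t_n)^{-1}t_k(t_{k+1}\cdots t_n)\}$; (iii) $w\notin(t_1t_2\cdots t_{k-1}\overline t_k{\star})$.
   Context: $\Sigma_{0,1,n}$ is the free group on $t_1,\dots,t_n$; write $\overline t_k=t_k^{-1}$. For $v\in\Sigma_{0,1,n}$, $(v{\star})$ is the set of elements whose reduced word begins with the reduced word of $v$. Empty products equal $1$. Let $A$ be the set of formal symbols $\overline z_1,t_1,\overline t_1,\dots,t_n,\overline t_n,z_1$, totally ordered by $\overline z_1<t_1<\overline t_1<\dots<t_n<\overline t_n<z_1$. For a reduced word $a_1\cdots a_m$ (with $a_i\in\{t_k^{\pm1}\}$), its Whitehead expansion is $(c_1,\dots,c_{2m+2})=(\overline z_1,a_1,\overline a_1,\dots,a_m,\overline a_m,z_1)$. Two $2$-element sets $\{a,b\},\{c,d\}$ of integers are nested if $a,b,c,d$ are distinct and either both or neither of $c,d$ lie strictly between $a$ and $b$. A family of such sets is nested if every two distinct members are nested. A $2M$-tuple $(c_1,\dots,c_{2M})$ of elements of $A$ is planar if there is a permutation $\pi$ of $\{1,\dots,2M\}$ with three properties: - $\pi(i)<\pi(j)$ implies $c_i\le c_j$; - the family $\{\{\pi(2i-1),\pi(2i)\}\}_{1\le i\le M}$ is nested; - the family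 $\{\{\pi(2i),\pi(2i+1)\}\}_{1\le i\le M-1}$ is nested. $w$ is a planar word if the Whitehead expansion of its reduced word is planar. *)

(* Defs.v *)
From mathcomp Require Import all_boot.
Set Implicit Arguments. Unset Strict Implicit. Unset Printing Implicit Defensive.

(* A letter of the free group Sigma_{0,1,n}: (k, false) is t_k, (k, true) is
   \overline t_k = t_k^{-1}. *)
Definition letter := (nat * bool)%type.

Definition T (k : nat) : letter := (k, false).
Definition Tbar (k : nat) : letter := (k, true).

Definition linv (a : letter) : letter := (a.1, ~~ a.2).

Definition valid_letter (n : nat) (a : letter) : bool := (1 <= a.1 <= n).

(* Elements of
   the free group Sigma_{0,1,n} are in bijection with reduced words over the
   valid letters; we represent an element by its reduced word. *)
Definition reduced (w : seq letter) : bool :=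
  sorted (fun a b => b != linv a) w.

Definition squarefree (w : seq letter) : Prop :=
  forall i, i.+1 < size w -> nth (0, false) w i != nth (0, false) w i.+1.

Inductive sym := Zbar1 | Lt of letter | Z1.

(* Rank realising the total order zbar_1 < t_1 < tbar_1 < ... < t_n < tbar_n < z_1
   (on symbols whose letters have index in 1..n). *)
Definition sym_rank (n : nat) (x : sym) : nat :=
  match x with
  | Zbar1 => 0
  | Lt (k, false) => (2 * k).-1
  | Lt (k, true) => 2 * k
  | Z1 => (2 * n).+1
  end.

Definition sym_le (n : nat) (x y : sym) : bool := sym_rank n x <= sym_rank n y.

Definition whitehead (w : seq letter) : seq sym :=
  Zbar1 :: flatten [seq [:: Lt a; Lt (linv a)] | a <- w] ++ [:: Z1].

Definition strictly_between (a b c : nat) : bool := (minn a b < c < maxn a b).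

Definition nested (a b c d : nat) : bool :=
  uniq [:: a; b; c; d] &&
  (strictly_between a b c == strictly_between a b d).

(* The permutation pi of
   {0,...,2M-1} is given by the sequence s with pi(i) = nth 0 s i; the
   paper's 1-based pairs {pi(2i-1),pi(2i)} (1<=i<=M) become
   {pi(2i),pi(2i+1)} (0<=i<M), and {pi(2i),pi(2i+1)} (1<=i<=M-1) become
   {pi(2i+1),pi(2i+2)} (0<=i<M-1). *)
Definition planar (n : nat) (c : seq sym) : Prop :=
  ~~ odd (size c) /\
  let M := (size c)./2 in
  exists s : seq nat,
    [/\ perm_eq s (iota 0 (size c)),
        (forall i j, i < size c -> j < size c ->
           nth 0 s i < nth 0 s j -> sym_le n (nth Z1 c i) (nth Z1 c j)),
        (forall i j, i < M -> j < M -> i != j ->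
           nested (nth 0 s (2 * i)) (nth 0 s (2 * i).+1)
                  (nth 0 s (2 * j)) (nth 0 s (2 * j).+1)) &
        (forall i j, i.+1 < M -> j.+1 < M -> i != j ->
           nested (nth 0 s (2 * i).+1) (nth 0 s (2 * i).+2)
                  (nth 0 s (2 * j).+1) (nth 0 s (2 * j).+2))].

Definition planar_word (n : nat) (w : seq letter) : Prop :=
  planar n (whitehead w).

Definition tbar_down (n k : nat) : seq letter :=
  [seq Tbar i | i <- rev (iota k.+1 (n - k))].
Definition t_up (n k : nat) : seq letter :=
  [seq T i | i <- iota k.+1 (n - k)].
Definition t_upto (k : nat) : seq letter :=
  [seq T i | i <- iota 1 k.-1].

(* Main.v *)
Require Import Defs.
From Stdlib Require Import Lia PeanoNat.

Definition rk (x : nat * bool) : nat := if snd x then 2 * fst x else 2 * fst x - 1.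
Definition linv' (x : nat * bool) : nat * bool := (fst x, negb (snd x)).
Definition btw (x a b : nat) : Prop := (a < x < b) \/ (b < x < a).

Record ctx (n m : nat) (W : nat -> nat * bool) (p R : nat -> nat) : Prop := {
 HRo : forall i j, i < 2*m+2 -> j < 2*m+2 -> R i < R j -> p i < p j;
 Hinj : forall i j, i < 2*m+2 -> j < 2*m+2 -> p i = p j -> i = j;
 HR0 : R 0 = 0;
 HRl : R (2*m+1) = 2*n+1;
 HRodd : forall i, i < m -> R (2*i+1) = rk (W i);
 HRev : forall i, i < m -> R (2*i+2) = rk (linv' (W i));
 Hval : forall i, i < m -> 1 <= fst (W i) <= n;
 Hred : forall i, i+1 < m -> W (i+1) <> linv' (W i);
 Hup : forall i j, i <= m -> j <= m -> i <> j ->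
   (btw (p (2*j)) (p (2*i)) (p (2*i+1)) <-> btw (p (2*j+1)) (p (2*i)) (p (2*i+1)));
 Hlo : forall i j, i < m -> j < m -> i <> j ->
   (btw (p (2*j+1)) (p (2*i+1)) (p (2*i+2)) <-> btw (p (2*j+2)) (p (2*i+1)) (p (2*i+2)))
}.
Arguments HRo {n m W p R} c.
Arguments Hinj {n m W p R} c.
Arguments HR0 {n m W p R} c.
Arguments HRl {n m W p R} c.
Arguments HRodd {n m W p R} c.
Arguments HRev {n m W p R} c.
Arguments Hval {n m W p R} c.
Arguments Hred {n m W p R} c.
Arguments Hup {n m W p R} c.
Arguments Hlo {n m W p R} c.

Lemma HupF {n m W p R} (C : ctx n m W p R) i j a b c d :
  i <= m -> j <= m -> i <> j -> a = 2*i -> b = 2*i+1 -> c = 2*j -> d = 2*j+1 ->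
  (btw (p c) (p a) (p b) <-> btw (p d) (p a) (p b)).
Proof. intros; subst; apply (Hup C); auto. Qed.

Lemma HloF {n m W p R} (C : ctx n m W p R) i j a b c d :
  i < m -> j < m -> i <> j -> a = 2*i+1 -> b = 2*i+2 -> c = 2*j+1 -> d = 2*j+2 ->
  (btw (p c) (p a) (p b) <-> btw (p d) (p a) (p b)).
Proof. intros; subst; apply (Hlo C); auto. Qed.

Lemma HRoddF {n m W p R} (C : ctx n m W p R) i a : i < m -> a = 2*i+1 -> R a = rk (W i).
Proof. intros; subst; apply (HRodd C); auto. Qed.
Lemma HRevF {n m W p R} (C : ctx n m W p R) i a : i < m -> a = 2*i+2 -> R a = rk (linv' (W i)).
Proof. intros; subst; apply (HRev C); auto. Qed.

Lemma ordF {n m W p R} (C : ctx n m W p R) a b : a < 2*m+2 -> b < 2*m+2 -> a <> b ->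
  (R a < R b -> p a < p b) /\ (R b < R a -> p b < p a) /\ p a <> p b.
Proof.
  intros Ha Hb Hab. split; [|split].
  - apply (HRo C); auto.
  - apply (HRo C); auto.
  - intro E. apply Hab. apply (Hinj C); auto.
Qed.

Ltac ordp C a b := let H := fresh "O" in
  pose proof (ordF C a b ltac:(lia) ltac:(lia) ltac:(lia)) as H.

Lemma rk_val x : rk x = if snd x then 2 * fst x else 2 * fst x - 1.
Proof. reflexivity. Qed.

Ltac letter_destr x := let a := fresh "a" in let b := fresh "b" in
  destruct x as [a b]; destruct b; cbn [rk linv' fst snd negb] in *.

Ltac cmp C a b := match type of C with ctx _ _ _ ?p _ =>
  (assert (p a <> p b) by (let E := fresh in intro E; apply (Hinj C) in E; lia));
  try (assert (p a < p b) by (apply (HRo C); lia));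
  try (assert (p b < p a) by (apply (HRo C); lia)) end.

From Stdlib Require Import Lia PeanoNat.

Lemma same_or_inv (x y : nat * bool) : fst x = fst y -> x = y \/ x = linv' y.
Proof. destruct x as [a b], y as [c d]; simpl; intros ->. destruct b, d; auto. Qed.

Lemma rank_close (x y : nat*bool) : 1 <= fst x -> 1 <= fst y ->
  (rk x = rk y \/ rk x = rk (linv' y)) -> fst x = fst y.
Proof. destruct x as [a []], y as [c []]; unfold rk, linv'; simpl; lia. Qed.

Lemma rk_linv_bounds (x : nat*bool) : 1 <= fst x ->
  (rk x + 1 = rk (linv' x) /\ snd x = false) \/ (rk (linv' x) + 1 = rk x /\ snd x = true).
Proof. destruct x as [a []]; unfold rk, linv'; simpl; lia. Qed.

Lemma rk_le (x : nat*bool) n : 1 <= fst x <= n -> 1 <= rk x <= 2*n.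
Proof. destruct x as [a []]; unfold rk, linv'; simpl; lia. Qed.

Lemma descA {n m W p R} (C : ctx n m W p R) x : forall d j, m - j = d -> j + 1 < m ->
  W (j+1) = x -> W j = x -> btw (p (2*j+4)) (p (2*j+2)) (p (2*j+3)) -> False.
Proof.
  induction d; intros j Hd Hj H1 H0 Hb; [lia|].
  assert (Hvx := Hval C j ltac:(lia)). rewrite H0 in Hvx.
  assert (Rj2 : R (2*j+2) = rk (linv' x)) by (rewrite <- H0; apply (HRevF C); lia).
  assert (Rj3 : R (2*j+3) = rk x) by (rewrite <- H1; apply (HRoddF C); lia).
  assert (U : btw (p (2*j+4)) (p (2*j+2)) (p (2*j+3)) <-> btw (p (2*j+5)) (p (2*j+2)) (p (2*j+3)))
    by (apply (HupF C (j+1) (j+2)); lia).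
  apply U in Hb.
  pose proof (rk_linv_bounds x ltac:(lia)) as Bx.
  pose proof (rk_le x n Hvx) as Lx. pose proof (rk_le (linv' x) n Hvx) as Lx'.
  destruct (Nat.eq_dec (j+2) m) as [Em|Nm].
  - pose proof (HRl C) as Hl. replace (2*m+1) with (2*j+5) in Hl by lia.
    cmp C (2*j+5) (2*j+2). cmp C (2*j+5) (2*j+3). unfold btw in *. lia.
  - assert (Rj5 : R (2*j+5) = rk (W (j+2))) by (apply (HRoddF C); lia).
    assert (Hvy := Hval C (j+2) ltac:(lia)).
    assert (Hr : W (j+2) <> linv' x) by
      (rewrite <- H1; replace (j+2) with (j+1+1) by lia; apply (Hred C); lia).
    pose proof (ordF C (2*j+5) (2*j+2) ltac:(lia) ltac:(lia) ltac:(lia)) as O1.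
    pose proof (ordF C (2*j+5) (2*j+3) ltac:(lia) ltac:(lia) ltac:(lia)) as O2.
    assert (F : fst (W (j+2)) = fst x).
    { apply rank_close; try lia.
      pose proof (rk_le (W (j+2)) n Hvy). unfold btw in *. lia. }
    assert (Ey : W (j+2) = x).
    { destruct (same_or_inv (W (j+2)) x F) as [E|E]; auto; congruence. }
    clear O1 O2 F. rewrite Ey in Rj5.
    assert (Rj4 : R (2*j+4) = rk (linv' x)) by (rewrite <- H1; apply (HRevF C); lia).
    assert (Rj6 : R (2*j+6) = rk (linv' x)) by (rewrite <- Ey; apply (HRevF C); lia).
    assert (L : btw (p (2*j+5)) (p (2*j+3)) (p (2*j+4)) <-> btw (p (2*j+6)) (p (2*j+3)) (p (2*j+4)))
      by (apply (HloF C (j+1) (j+2)); lia).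
    apply (IHd (j+1)); try lia; [rewrite <- Ey; f_equal; lia| rewrite <- H1; f_equal; lia |].
    replace (2*(j+1)+4) with (2*j+6) by lia.
    replace (2*(j+1)+2) with (2*j+4) by lia.
    replace (2*(j+1)+3) with (2*j+5) by lia.
    destruct Bx as [[Bx _]|[Bx _]];
    cmp C (2*j+2) (2*j+4); cmp C (2*j+2) (2*j+6); cmp C (2*j+3) (2*j+4);
    cmp C (2*j+3) (2*j+6); cmp C (2*j+4) (2*j+5); cmp C (2*j+4) (2*j+6);
    cmp C (2*j+5) (2*j+6); cmp C (2*j+3) (2*j+5); cmp C (2*j+2) (2*j+3);
    unfold btw in *; lia.
Qed.

Lemma linv_inv x : linv' (linv' x) = x.
Proof. destruct x as [a []]; reflexivity. Qed.

Lemma descB {n m W p R} (C : ctx n m W p R) x : forall j, j + 1 < m ->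
  W j = x -> W (j+1) = x -> btw (p (2*j+1)) (p (2*j+2)) (p (2*j+3)) -> False.
Proof.
  induction j as [|j IH]; intros Hj H0 H1 Hb.
  - assert (Hvx := Hval C 0 ltac:(lia)). rewrite H0 in Hvx.
    pose proof (rk_le x n Hvx) as Lx. pose proof (rk_le (linv' x) n Hvx) as Lx'.
    assert (R2 : R 2 = rk (linv' x)) by (rewrite <- H0; apply (HRevF C); lia).
    assert (R3 : R 3 = rk x) by (rewrite <- H1; apply (HRoddF C); lia).
    assert (U : btw (p 0) (p 2) (p 3) <-> btw (p 1) (p 2) (p 3))
      by (apply (HupF C 1 0); lia).
    simpl in Hb. apply U in Hb. pose proof (HR0 C).
    cmp C 0 2. cmp C 0 3. unfold btw in *; lia.
  - replace (2 * S j + 1) with (2*j+3) in Hb by lia.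
    replace (2 * S j + 2) with (2*j+4) in Hb by lia.
    replace (2 * S j + 3) with (2*j+5) in Hb by lia.
    replace (S j) with (j+1) in * by lia.
    replace (j+1+1) with (j+2) in * by lia.
    assert (Hvx := Hval C (j+1) ltac:(lia)). rewrite H0 in Hvx.
    pose proof (rk_le x n Hvx) as Lx. pose proof (rk_le (linv' x) n Hvx) as Lx'.
    pose proof (rk_linv_bounds x ltac:(lia)) as Bx.
    assert (R4 : R (2*j+4) = rk (linv' x)) by (rewrite <- H0; apply (HRevF C); lia).
    assert (R5 : R (2*j+5) = rk x) by (rewrite <- H1; apply (HRoddF C); lia).
    assert (R3 : R (2*j+3) = rk x) by (rewrite <- H0; apply (HRoddF C); lia).
    assert (U : btw (p (2*j+2)) (p (2*j+4)) (p (2*j+5)) <-> btw (p (2*j+3)) (p (2*j+4)) (p (2*j+5)))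
      by (apply (HupF C (j+2) (j+1)); lia).
    apply U in Hb.
    assert (Hvy := Hval C j ltac:(lia)).
    assert (R2 : R (2*j+2) = rk (linv' (W j))) by (apply (HRevF C); lia).
    pose proof (ordF C (2*j+2) (2*j+4) ltac:(lia) ltac:(lia) ltac:(lia)) as O1.
    pose proof (ordF C (2*j+2) (2*j+5) ltac:(lia) ltac:(lia) ltac:(lia)) as O2.
    assert (F : fst (linv' (W j)) = fst x).
    { apply rank_close; try (simpl; lia).
      pose proof (rk_le (linv' (W j)) n Hvy). unfold btw in *. lia. }
    assert (Ey : W j = x).
    { simpl in F. destruct (same_or_inv (W j) x F) as [E|E]; auto.
      exfalso. apply (Hred C j ltac:(lia)). rewrite E, linv_inv. 
      exact H0. }
    clear O1 O2 F. rewrite Ey in R2.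
    assert (R1 : R (2*j+1) = rk x) by (rewrite <- Ey; apply (HRoddF C); lia).
    assert (L : btw (p (2*j+1)) (p (2*j+3)) (p (2*j+4)) <-> btw (p (2*j+2)) (p (2*j+3)) (p (2*j+4)))
      by (apply (HloF C (j+1) j); lia).
    refine (IH _ Ey H0 _); [lia|].
    destruct Bx as [[Bx _]|[Bx _]];
    cmp C (2*j+1) (2*j+2); cmp C (2*j+1) (2*j+3); cmp C (2*j+1) (2*j+4); cmp C (2*j+1) (2*j+5);
    cmp C (2*j+2) (2*j+3); cmp C (2*j+2) (2*j+4); cmp C (2*j+2) (2*j+5);
    cmp C (2*j+3) (2*j+4); cmp C (2*j+3) (2*j+5); cmp C (2*j+4) (2*j+5);
    unfold btw in *; lia.
Qed.

Lemma sqfree {n m W p R} (C : ctx n m W p R) i : i + 1 < m -> W (i+1) <> W i.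
Proof.
  intros Hi E. set (x := W i) in *.
  assert (Hvx := Hval C i ltac:(lia)). fold x in Hvx.
  pose proof (rk_linv_bounds x ltac:(lia)) as Bx.
  assert (R1 : R (2*i+1) = rk x) by (apply (HRoddF C); lia).
  assert (R2 : R (2*i+2) = rk (linv' x)) by (apply (HRevF C); lia).
  assert (R3 : R (2*i+3) = rk x) by (rewrite <- E; apply (HRoddF C); lia).
  assert (R4 : R (2*i+4) = rk (linv' x)) by (rewrite <- E; apply (HRevF C); lia).
  assert (L : btw (p (2*i+3)) (p (2*i+1)) (p (2*i+2)) <-> btw (p (2*i+4)) (p (2*i+1)) (p (2*i+2)))
      by (apply (HloF C i (i+1)); lia).
  assert (D : btw (p (2*i+4)) (p (2*i+2)) (p (2*i+3)) \/ btw (p (2*i+1)) (p (2*i+2)) (p (2*i+3))).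
  { destruct Bx as [[Bx _]|[Bx _]];
    cmp C (2*i+1) (2*i+2); cmp C (2*i+1) (2*i+3); cmp C (2*i+1) (2*i+4);
    cmp C (2*i+2) (2*i+3); cmp C (2*i+2) (2*i+4); cmp C (2*i+3) (2*i+4);
    unfold btw in *; lia. }
  destruct D as [D|D].
  - exact (descA C x (m - i) i eq_refl Hi E eq_refl D).
  - exact (descB C x i Hi eq_refl E D).
Qed.

From Stdlib Require Import Lia PeanoNat.

Lemma even_odd_split l : exists i, l = 2*i \/ l = 2*i+1.
Proof. destruct (Nat.Even_or_Odd l) as [[i Hi]|[i Hi]]; exists i; lia. Qed.

Definition St3 (m : nat) (W : nat -> nat*bool) (p : nat -> nat) k t j :=
  j+1 <= k /\ k-1 <= t /\ t+1 <= m /\ W t = (j+1,true) /\ btw (p (2*t+2)) (p (2*j)) (p (2*j+1)).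




Lemma p3_ranks {n m W p R} (C : ctx n m W p R) k :
  1 <= k <= n -> k <= m -> (forall i, i < k-1 -> W i = (i+1,false)) -> W (k-1) = (k,true) ->
  (forall l, l <= 2*k-2 -> R l = l) /\ R (2*k-1) = 2*k /\ R (2*k) = 2*k-1.
Proof.
  intros Hk Hkm Hpre Hlast. split; [|split].
  - intros l Hl. destruct (even_odd_split l) as [i [->| ->]].
      + destruct i as [|i]. { simpl. rewrite (HR0 C). lia. }
      rewrite (HRevF C i (2*S i)); [|lia|lia]. rewrite Hpre by lia.
      unfold rk, linv'; simpl. lia.
    + rewrite (HRoddF C i (2*i+1)); [|lia|lia]. rewrite Hpre by lia.
      unfold rk; simpl. lia.
  - rewrite (HRoddF C (k-1) (2*k-1)); [|lia|lia]. rewrite Hlast. unfold rk; simpl; lia.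
  - rewrite (HRevF C (k-1) (2*k)); [|lia|lia]. rewrite Hlast. unfold rk, linv'; simpl; lia.
Qed.

Lemma p3_step {n m W p R} (C : ctx n m W p R) k t j :
  1 <= k <= n -> k <= m -> (forall i, i < k-1 -> W i = (i+1,false)) -> W (k-1) = (k,true) ->
  St3 m W p k t j -> 1 <= j /\ St3 m W p k (t+1) (j-1).
Proof.
  intros Hk Hkm Hpre Hlast [Hj [Ht [Htm [Hw Hb]]]].
  destruct (p3_ranks C k Hk Hkm Hpre Hlast) as [Rlow [Rk1 Rk2]].
  assert (U : btw (p (2*t+2)) (p (2*j)) (p (2*j+1)) <-> btw (p (2*t+3)) (p (2*j)) (p (2*j+1)))
    by (apply (HupF C j (t+1)); lia).
  apply U in Hb. clear U.
  assert (R2j : R (2*j) = 2*j) by (apply Rlow; lia).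
  assert (R2j1 : R (2*j+1) = 2*j+1 \/ (j = k-1 /\ R (2*j+1) = 2*j+2)).
  { destruct (Nat.eq_dec j (k-1)) as [E|E].
    - right. split; auto. replace (2*j+1) with (2*k-1) by lia. lia.
    - left. apply Rlow. lia. }
  destruct (Nat.eq_dec (t+1) m) as [Em|Nm].
  - exfalso. pose proof (HRl C) as Hl. replace (2*m+1) with (2*t+3) in Hl by lia.
    cmp C (2*t+3) (2*j). cmp C (2*t+3) (2*j+1). unfold btw in *. lia.
  - assert (Rt3 : R (2*t+3) = rk (W (t+1))) by (apply (HRoddF C); lia).
    assert (Hvy := Hval C (t+1) ltac:(lia)).
    assert (Hr : W (t+1) <> (j+1,false)).
    { replace (j+1,false) with (linv' (W t)) by (rewrite Hw; reflexivity). apply (Hred C); lia. }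
    assert (Hs : W (t+1) <> (j+1,true)) by (rewrite <- Hw; apply (sqfree C); lia).
    pose proof (ordF C (2*t+3) (2*j) ltac:(lia) ltac:(lia) ltac:(lia)) as O1.
    pose proof (ordF C (2*t+3) (2*j+1) ltac:(lia) ltac:(lia) ltac:(lia)) as O2.
    assert (Ey : W (t+1) = (j,true) /\ 1 <= j).
    { destruct (W (t+1)) as [a b]. unfold rk in Rt3; simpl in *.
      assert (a <> j+1) by (intro; subst; destruct b; congruence).
      destruct b; unfold btw in *.
      - assert (a = j) by lia. subst. split; auto; lia.
      - exfalso. lia. }
    destruct Ey as [Ey Hj1]. clear O1 O2. rewrite Ey in Rt3. unfold rk in Rt3; simpl in Rt3.
    split; [exact Hj1|].
    destruct j as [|j0]; [lia|]. replace (S j0 - 1) with j0 by lia.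
    assert (Rt4 : R (2*t+4) = 2*j0+1).
    { rewrite (HRevF C (t+1) (2*t+4)); [|lia|lia]. rewrite Ey. unfold rk, linv'; simpl. lia. }
    assert (R0 : R (2*j0) = 2*j0) by (apply Rlow; lia).
    assert (R1 : R (2*j0+1) = 2*j0+1) by (apply Rlow; lia).
    assert (L : btw (p (2*t+3)) (p (2*j0+1)) (p (2*j0+2)) <-> btw (p (2*t+4)) (p (2*j0+1)) (p (2*j0+2)))
      by (apply (HloF C j0 (t+1)); lia).
    replace (2 * S j0) with (2*j0+2) in * by lia.
    replace (2*j0+2+1) with (2*j0+3) in * by lia.
    unfold St3. split; [lia|split;[lia|split;[lia|split]]].
    + rewrite Ey. f_equal. lia.
    + replace (2*(t+1)+2) with (2*t+4) by lia.
      cmp C (2*j0) (2*j0+1); cmp C (2*j0) (2*j0+2); cmp C (2*j0) (2*j0+3);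
      cmp C (2*j0) (2*t+3); cmp C (2*j0) (2*t+4);
      cmp C (2*j0+1) (2*j0+2); cmp C (2*j0+1) (2*j0+3); cmp C (2*j0+1) (2*t+3); cmp C (2*j0+1) (2*t+4);
      cmp C (2*j0+2) (2*j0+3); cmp C (2*j0+2) (2*t+3); cmp C (2*j0+2) (2*t+4);
      cmp C (2*j0+3) (2*t+3); cmp C (2*j0+3) (2*t+4); cmp C (2*t+3) (2*t+4).
      unfold btw in *. lia.
Qed.

Lemma part3 {n m W p R} (C : ctx n m W p R) k :
  1 <= k <= n -> k <= m -> (forall i, i < k-1 -> W i = (i+1,false)) -> W (k-1) = (k,true) -> False.
Proof.
  intros Hk Hkm Hpre Hlast.
  destruct (p3_ranks C k Hk Hkm Hpre Hlast) as [Rlow [Rk1 Rk2]].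
  assert (Ch : forall d, d <= k-1 -> St3 m W p k (k-1+d) (k-1-d)).
  { induction d as [|d IH]; intros Hd.
    - unfold St3. replace (k-1+0) with (k-1) by lia. replace (k-1-0) with (k-1) by lia.
      split; [lia|split;[lia|split;[lia|split]]].
      + rewrite Hlast. f_equal. lia.
      + replace (2*(k-1)+2) with (2*k) by lia. replace (2*(k-1)+1) with (2*k-1) by lia.
        assert (R (2*(k-1)) = 2*(k-1)) by (apply Rlow; lia).
        cmp C (2*k) (2*(k-1)). cmp C (2*k) (2*k-1). unfold btw; lia.
    - destruct (p3_step C k _ _ Hk Hkm Hpre Hlast (IH ltac:(lia))) as [_ HS].
      replace (k-1+S d) with (k-1+d+1) by lia. replace (k-1-S d) with (k-1-d-1) by lia. exact HS. }
  destruct (p3_step C k _ _ Hk Hkm Hpre Hlast (Ch (k-1) ltac:(lia))) as [H _]. lia.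
Qed.

From Stdlib Require Import Lia PeanoNat.

Definition fex (n k q i : nat) : nat * bool :=
  if i <? q then (n - i, true) else (k + i - q, false).

Definition St2 (m : nat) (W : nat -> nat*bool) (p : nat -> nat) n k q t e :=
  q < t /\ t <= m /\ t + e = 2*q+1 /\ (forall i, i < t -> W i = fex n k q i) /\
  match e with 0 => p 1 < p (2*t) | S e' => btw (p (2*t)) (p (2*e'+2)) (p (2*e'+3)) end.

Lemma fex_ge n k q i : q <= i -> fex n k q i = (k + i - q, false).
Proof. intros H. unfold fex. destruct (Nat.ltb_spec i q); [lia|reflexivity]. Qed.
Lemma fex_lt n k q i : i < q -> fex n k q i = (n - i, true).
Proof. intros H. unfold fex. destruct (Nat.ltb_spec i q); [reflexivity|lia]. Qed.

Lemma p2_ranks {n m W p R} (C : ctx n m W p R) k q :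
  1 <= k <= n -> q = n - k -> q < m -> (forall i, i < q -> W i = (n-i,true)) -> W q = (k,false) ->
  (forall l, 1 <= l <= 2*q -> R l = 2*n+1-l) /\ R (2*q+1) = 2*k-1 /\ R (2*q+2) = 2*k.
Proof.
  intros Hk Hq Hqm Hpre Hlast. split; [|split].
  - intros l Hl. destruct (even_odd_split l) as [i [->| ->]].
    + destruct i as [|i]. { lia. }
      rewrite (HRevF C i (2*S i)); [|lia|lia]. rewrite Hpre by lia.
      unfold rk, linv'; simpl. lia.
    + rewrite (HRoddF C i (2*i+1)); [|lia|lia]. rewrite Hpre by lia.
      unfold rk; simpl. lia.
  - rewrite (HRoddF C q (2*q+1)); [|lia|lia]. rewrite Hlast. unfold rk; simpl; lia.
  - rewrite (HRevF C q (2*q+2)); [|lia|lia]. rewrite Hlast. unfold rk, linv'; simpl; lia.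
Qed.

Lemma p2_step {n m W p R} (C : ctx n m W p R) k q t e :
  1 <= k <= n -> q = n - k -> q < m -> (forall i, i < q -> W i = (n-i,true)) -> W q = (k,false) ->
  St2 m W p n k q t (S e) -> St2 m W p n k q (t+1) e.
Proof.
  intros Hk Hq Hqm Hpre Hlast [Hqt [Htm [Hte [Hf Hb]]]].
  destruct (p2_ranks C k q Hk Hq Hqm Hpre Hlast) as [Rhi [Rq1 Rq2]].
  assert (Hwt : W (t-1) = (n - S e, false)).
  { rewrite Hf by lia. rewrite fex_ge by lia. f_equal. lia. }
  replace (2*e+2) with (2*S e) in Hb by lia. replace (2*e+3) with (2*S e+1) in Hb by lia.
  assert (U : btw (p (2*t)) (p (2*S e)) (p (2*S e+1)) <-> btw (p (2*t+1)) (p (2*S e)) (p (2*S e+1)))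
    by (apply (HupF C (S e) t); lia).
  apply U in Hb. clear U.
  assert (Re : R (2*S e) = 2*n+1-2*S e) by (apply Rhi; lia).
  assert (Re1 : 2*n-2*S e-1 <= R (2*S e+1) <= 2*n-2*S e) by (destruct (Nat.eq_dec (S e) q) as [E|E];
     [rewrite E, Rq1; lia | rewrite Rhi; lia]).
  destruct (Nat.eq_dec t m) as [Em|Nm].
  - exfalso. pose proof (HRl C) as Hl. replace (2*m+1) with (2*t+1) in Hl by lia.
    cmp C (2*t+1) (2*S e). cmp C (2*t+1) (2*S e+1). unfold btw in *. lia.
  - assert (Rt1 : R (2*t+1) = rk (W t)) by (apply (HRoddF C); lia).
    assert (Hvy := Hval C t ltac:(lia)).
    assert (Hr : W t <> (n - S e,true)).
    { replace (n - S e,true) with (linv' (W (t-1))) by (rewrite Hwt; reflexivity).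
      replace t with (t-1+1) at 1 by lia. apply (Hred C); lia. }
    assert (Hs : W t <> (n - S e,false)).
    { rewrite <- Hwt. replace t with (t-1+1) at 1 by lia. apply (sqfree C); lia. }
    pose proof (ordF C (2*t+1) (2*S e) ltac:(lia) ltac:(lia) ltac:(lia)) as O1.
    pose proof (ordF C (2*t+1) (2*S e+1) ltac:(lia) ltac:(lia) ltac:(lia)) as O2.
    assert (Ey : W t = (n - e, false)).
    { destruct (W t) as [a b]. unfold rk in Rt1; simpl in *.
      assert (a <> n - S e) by (intro; subst; destruct b; congruence).
      destruct b; unfold btw in *.
      - exfalso; lia.
      - f_equal. lia. }
    clear O1 O2.
    assert (Rt2 : R (2*t+2) = 2*n-2*e).
    { rewrite (HRevF C t (2*t+2)); [|lia|lia]. rewrite Ey. unfold rk, linv'; simpl. lia. }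
    assert (Rm : R (2*e+1) = 2*n+1-(2*e+1)) by (apply Rhi; lia).
    assert (L : btw (p (2*t+1)) (p (2*e+1)) (p (2*e+2)) <-> btw (p (2*t+2)) (p (2*e+1)) (p (2*e+2)))
      by (apply (HloF C e t); lia).
    replace (2*e+2) with (2*S e) in L by lia.
    assert (K1 : p (2*e+1) < p (2*t+2)).
    { cmp C (2*t+1) (2*e+1). cmp C (2*t+2) (2*e+1). cmp C (2*t+2) (2*S e).
      cmp C (2*e+1) (2*S e). cmp C (2*S e) (2*S e+1). unfold btw in *. lia. }
    unfold St2. split; [lia|split;[lia|split;[lia|split]]].
    + intros i Hi. destruct (Nat.eq_dec i t) as [->|Ne]; [|apply Hf; lia].
      rewrite Ey, fex_ge by lia. f_equal. lia.
    + replace (2*(t+1)) with (2*t+2) by lia. destruct e as [|e'].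
      * exact K1.
      * assert (Rm2 : R (2*e'+2) = 2*n+1-(2*e'+2)) by (apply Rhi; lia).
        replace (2*e'+3) with (2*S e'+1) by lia.
        cmp C (2*t+2) (2*e'+2). unfold btw. lia.
Qed.

Lemma part2 {n m W p R} (C : ctx n m W p R) k q :
  1 <= k <= n -> q = n - k -> q < m -> (forall i, i < q -> W i = (n-i,true)) -> W q = (k,false) ->
  m = 2*q+1 /\ forall i, i < m -> W i = fex n k q i.
Proof.
  intros Hk Hq Hqm Hpre Hlast.
  destruct (p2_ranks C k q Hk Hq Hqm Hpre Hlast) as [Rhi [Rq1 Rq2]].
  assert (Ch : forall d, d <= q -> St2 m W p n k q (q+1+d) (q-d)).
  { induction d as [|d IH]; intros Hd.
    - unfold St2. replace (q+1+0) with (q+1) by lia. replace (q-0) with q by lia.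
      split; [lia|split;[lia|split;[lia|split]]].
      + intros i Hi. destruct (Nat.eq_dec i q) as [->|Ne].
        * rewrite Hlast, fex_ge by lia. f_equal. lia.
        * rewrite Hpre, fex_lt by lia. reflexivity.
      + replace (2*(q+1)) with (2*q+2) by lia. destruct q as [|q'].
        * simpl in Rq1, Rq2 |- *. cmp C 1 2. lia.
        * assert (R (2*q'+2) = 2*n+1-(2*q'+2)) by (apply Rhi; lia).
          replace (2*q'+3) with (2*S q'+1) by lia.
          cmp C (2*S q'+2) (2*q'+2). cmp C (2*S q'+2) (2*S q'+1). unfold btw; lia.
    - assert (E : q - d = S (q - S d)) by lia.
      pose proof (IH ltac:(lia)) as H. rewrite E in H.
      pose proof (p2_step C k q _ _ Hk Hq Hqm Hpre Hlast H) as H'.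
      replace (q+1+S d) with (q+1+d+1) by lia. exact H'. }
  pose proof (Ch q ltac:(lia)) as H. replace (q-q) with 0 in H by lia.
  destruct H as [_ [Htm [_ [Hf Hb]]]]. set (t := q+1+q) in *.
  destruct (Nat.eq_dec t m) as [Em|Nm].
  - split; [lia|]. intros i Hi. apply Hf. lia.
  - exfalso.
    assert (U : btw (p (2*t)) (p (2*0)) (p (2*0+1)) <-> btw (p (2*t+1)) (p (2*0)) (p (2*0+1)))
      by (apply (HupF C 0 t); lia).
    simpl in U. pose proof (HR0 C) as R0.
    assert (R1 : R 1 = 2*n \/ (q = 0 /\ R 1 = 2*n-1)).
    { destruct q as [|q']; [right; split; auto; simpl in Rq1; lia| left; rewrite Rhi; lia]. }
    assert (Rt1 : R (2*t+1) = rk (W t)) by (apply (HRoddF C); lia).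
    assert (Hvy := Hval C t ltac:(lia)).
    assert (Hwt : W (t-1) = (n, false)).
    { rewrite Hf by lia. rewrite fex_ge by lia. f_equal. lia. }
    assert (Hr : W t <> (n,true)).
    { replace (n,true) with (linv' (W (t-1))) by (rewrite Hwt; reflexivity).
      replace t with (t-1+1) at 1 by lia. apply (Hred C); lia. }
    assert (Hs : W t <> (n,false)).
    { rewrite <- Hwt. replace t with (t-1+1) at 1 by lia. apply (sqfree C); lia. }
    pose proof (ordF C (2*t+1) 1 ltac:(lia) ltac:(lia) ltac:(lia)) as O1.
    pose proof (ordF C (2*t+1) 0 ltac:(lia) ltac:(lia) ltac:(lia)) as O2.
    pose proof (ordF C 0 1 ltac:(lia) ltac:(lia) ltac:(lia)) as O3.
    destruct (W t) as [a b]. unfold rk in Rt1; simpl in *.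
    assert (a <> n) by (intro; subst; destruct b; congruence).
    destruct b; unfold btw in *; lia.
Qed.

From Stdlib Require Import Lia PeanoNat.
From mathcomp Require Import ssreflect ssrbool eqtype seq path.
Canonical nat_eqT := ssrnat.Datatypes_nat__canonical__eqtype_Equality.

Lemma sb_iff a b c : strictly_between a b c <-> btw c a b.
Proof.
  unfold strictly_between, btw, ssrnat.minn, ssrnat.maxn.
  destruct (@ssrnat.ltP a b) as [h|h]; split.
  - move/andP => [/ssrnat.ltP h1 /ssrnat.ltP h2]. lia.
  - intros [[h1 h2]|[h1 h2]]; [|lia]. apply/andP; split; apply/ssrnat.ltP; lia.
  - move/andP => [/ssrnat.ltP h1 /ssrnat.ltP h2]. lia.
  - intros [[h1 h2]|[h1 h2]]; [lia|]. apply/andP; split; apply/ssrnat.ltP; lia.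
Qed.

Lemma nested_iff a b c d : nested a b c d -> (btw c a b <-> btw d a b).
Proof.
  move=> /andP [_ /eqP E]. split; intro H; apply sb_iff; apply sb_iff in H.
  - by rewrite -E. - by rewrite E.
Qed.

Definition Fw (w : seq letter) := flatten [seq [:: Lt b; Lt (linv b)] | b <- w].

Lemma Fw_size w : size (Fw w) = 2 * size w.
Proof. induction w as [|a w IH]; [reflexivity|]. unfold Fw in *. simpl. rewrite IH. lia. Qed.

Lemma Fw_nth w i : i < size w ->
  nth Z1 (Fw w ++ [:: Z1]) (2*i) = Lt (nth (0,false) w i) /\
  nth Z1 (Fw w ++ [:: Z1]) (S (2*i)) = Lt (linv (nth (0,false) w i)).
Proof.
  revert i. induction w as [|a w IH]; intros i Hi; simpl in Hi; [lia|].
  destruct i as [|i]; [split; reflexivity|].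
  replace (2 * S i) with (S (S (2*i))) by lia. simpl. apply IH. lia.
Qed.

Lemma Fw_last w : nth Z1 (Fw w ++ [:: Z1]) (2 * size w) = Z1.
Proof.
  induction w as [|a w IH]; [reflexivity|].
  replace (2 * size (a :: w)) with (S (S (2*size w))) by (simpl; lia). exact IH.
Qed.

Lemma wh_size w : size (whitehead w) = 2 * size w + 2.
Proof.
  assert (H : size (Fw w ++ [:: Z1]) = S (2 * size w)).
  { induction w as [|a w IH]; [reflexivity|].
    change (S (S (size (Fw w ++ [:: Z1]))) = S (2 * size (a::w))). rewrite IH. simpl. lia. }
  change (S (size (Fw w ++ [:: Z1])) = 2 * size w + 2). rewrite H. lia. Qed.

Lemma wh_odd w i : i < size w -> nth Z1 (whitehead w) (2*i+1) = Lt (nth (0,false) w i).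
Proof. intros H. replace (2*i+1) with (S (2*i)) by lia. apply (Fw_nth w i H). Qed.
Lemma wh_even w i : i < size w -> nth Z1 (whitehead w) (2*i+2) = Lt (linv (nth (0,false) w i)).
Proof. intros H. replace (2*i+2) with (S (S (2*i))) by lia. apply (Fw_nth w i H). Qed.
Lemma wh_last w : nth Z1 (whitehead w) (2*size w+1) = Z1.
Proof. replace (2*size w+1) with (S (2*size w)) by lia. apply (Fw_last w). Qed.

Lemma rank_rk n x : sym_rank n (Lt x) = rk x.
Proof. destruct x as [a []]; unfold sym_rank, rk; simpl.
  - change (Nat.mul 2 a = 2 * a). reflexivity.
  - change (Nat.pred (Nat.mul 2 a) = 2 * a - 1). lia. Qed.

Lemma double_eq m : ssrnat.double m = 2 * m.
Proof. induction m; [reflexivity|]. rewrite ssrnat.doubleS IHm. lia. Qed.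

Lemma bridge n w : all (valid_letter n) w -> reduced w -> planar_word n w ->
  exists p R, ctx n (size w) (fun i => nth (0,false) w i) p R.
Proof.
  intros Hall Hred [_ Hpl]. cbv zeta in Hpl. destruct Hpl as [s [Hperm Hord Hu Hl]].
  set (c := whitehead w) in *. set (m := size w) in *.
  assert (Hsz : size c = 2*m+2) by apply wh_size.
  assert (Hss : size s = 2*m+2) by (rewrite (perm_size Hperm) size_iota; exact Hsz).
  assert (Huq : uniq s) by (rewrite (perm_uniq Hperm); apply iota_uniq).
  assert (HM : ssrnat.half (size c) = m + 1).
  { rewrite Hsz. replace (2*m+2) with (ssrnat.double (S m)) by (rewrite double_eq; lia).
    rewrite ssrnat.doubleK. lia. }
  rewrite HM in Hu Hl. rewrite Hsz in Hord.
  exists (fun i => nth 0 s i), (fun i => sym_rank n (nth Z1 c i)).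
  assert (Hinj : forall i j, i < 2*m+2 -> j < 2*m+2 -> nth 0 s i = nth 0 s j -> i = j).
  { intros i j Hi Hj E. have := nth_uniq 0 (s:=s) (i:=i) (j:=j).
    rewrite Hss E eqxx. intro H. have H' := H ltac:(apply/ssrnat.ltP; lia) ltac:(apply/ssrnat.ltP; lia) Huq. apply/eqP. by rewrite -H'. }
  constructor.
  - intros i j Hi Hj Hr. destruct (Nat.lt_total (nth 0 s i) (nth 0 s j)) as [h|[h|h]]; auto.
    + apply Hinj in h; auto. subst. lia.
    + exfalso. have := Hord j i. unfold sym_le. intro H.
      have H' := H ltac:(apply/ssrnat.ltP; lia) ltac:(apply/ssrnat.ltP; lia) ltac:(apply/ssrnat.ltP; lia).
      move/ssrnat.leP in H'. lia.
  - exact Hinj.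
  - reflexivity.
  - unfold c. rewrite wh_last. simpl. change (S (Nat.mul 2 n) = 2*n+1). lia.
  - intros i Hi. unfold c. rewrite wh_odd; [apply rank_rk|exact Hi].
  - intros i Hi. unfold c. rewrite wh_even; [apply rank_rk|exact Hi].
  - intros i Hi. move/(all_nthP (0,false)): Hall => Hall.
    have := Hall i ltac:(apply/ssrnat.ltP; exact Hi). unfold valid_letter.
    move/andP => [/ssrnat.leP h1 /ssrnat.leP h2]. simpl. lia.
  - intros i Hi. unfold reduced in Hred. unfold m in Hi.
    destruct w as [|a w']; simpl in Hi; [lia|]. simpl in Hred.
    move/(pathP (0,false)): Hred => H. assert (Hx : ssrnat.leq (S i) (size w')). apply/ssrnat.ltP. assert (Hi' : i < size w') by lia. exact Hi'. have := H i Hx.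
    replace (i+1) with (S i) by lia. simpl. move/eqP. auto.
  - intros i j Hi Hj Hij.
    have := Hu i j ltac:(apply/ssrnat.ltP; lia) ltac:(apply/ssrnat.ltP; lia) ltac:(apply/eqP; exact Hij).
    replace (2*i+1) with (S (2*i)) by lia. replace (2*j+1) with (S (2*j)) by lia.
    apply nested_iff.
  - intros i j Hi Hj Hij.
    have := Hl i j ltac:(apply/ssrnat.ltP; lia) ltac:(apply/ssrnat.ltP; lia) ltac:(apply/eqP; exact Hij).
    replace (2*i+1) with (S (2*i)) by lia. replace (2*j+1) with (S (2*j)) by lia.
    replace (2*i+2) with (S (S (2*i))) by lia. replace (2*j+2) with (S (S (2*j))) by lia.
    apply nested_iff.
Qed.

From Stdlib Require Import Lia PeanoNat.
From mathcomp Require Import ssreflect ssrbool eqtype seq path.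

Ltac natc := unfold ssrnat.subn, ssrnat.addn, ssrnat.muln in *.

Lemma ltb i n : ssrnat.leq (S i) n = true <-> i < n.
Proof. split; [move/ssrnat.ltP; auto| intro; apply/ssrnat.ltP; auto]. Qed.

Lemma tbar_down_size n k : size (tbar_down n k) = n - k.
Proof. unfold tbar_down. rewrite size_map size_rev size_iota. reflexivity. Qed.

Lemma tbar_down_nth n k i : i < n - k -> nth (0,false) (tbar_down n k) i = (n - i, true).
Proof.
  intros H. unfold tbar_down.
  rewrite (nth_map 0); [|apply ltb; rewrite size_rev size_iota; natc; lia].
  rewrite nth_rev; [|apply ltb; rewrite size_iota; natc; lia].
  rewrite size_iota nth_iota; [|apply ltb; natc; lia].
  unfold Tbar. f_equal. natc. lia.
Qed.

Lemma t_up_size n k : size (t_up n k) = n - k.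
Proof. unfold t_up. rewrite size_map size_iota. reflexivity. Qed.

Lemma t_up_nth n k i : i < n - k -> nth (0,false) (t_up n k) i = (k + 1 + i, false).
Proof.
  intros H. unfold t_up.
  rewrite (nth_map 0); [|apply ltb; rewrite size_iota; natc; lia].
  rewrite nth_iota; [|apply ltb; natc; lia].
  unfold T. f_equal. natc. lia.
Qed.

Lemma t_upto_size k : size (t_upto k) = k - 1.
Proof. unfold t_upto. rewrite size_map size_iota. simpl. lia. Qed.

Lemma t_upto_nth k i : i < k - 1 -> nth (0,false) (t_upto k) i = (i + 1, false).
Proof.
  intros H. unfold t_upto.
  rewrite (nth_map 0); [|apply ltb; rewrite size_iota; simpl; lia].
  rewrite nth_iota; [|apply ltb; simpl; lia].
  unfold T. f_equal. natc. lia.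
Qed.

Lemma prefix_facts (s1 w : seq letter) : prefix s1 w ->
  size s1 <= size w /\ forall i, i < size s1 -> nth (0,false) w i = nth (0,false) s1 i.
Proof.
  move/prefixP => [r ->]. split.
  - rewrite size_cat. natc. lia.
  - intros i Hi. rewrite nth_cat. case: ssrnat.ltP => h; [reflexivity|exfalso; apply h; exact Hi].
Qed.

Lemma rcons_nth (s : seq letter) x i : i <= size s ->
  nth (0,false) (rcons s x) i = if Nat.eqb i (size s) then x else nth (0,false) s i.
Proof.
  intros H. rewrite nth_rcons. destruct (Nat.eqb_spec i (size s)).
  - subst. by rewrite ssrnat.ltnn eqxx.
  - have h : i < size s by lia. by rewrite (introT ssrnat.ltP h).
Qed.

Lemma concl_sq n w : (exists p R, ctx n (size w) (fun i => nth (0,false) w i) p R) -> squarefree w.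
Proof.
  intros [p [R C]] i Hi. move/ssrnat.ltP: Hi => Hi.
  unfold letter in *. have H := sqfree C i ltac:(lia). simpl in H. rewrite Nat.add_1_r in H.
  apply/eqP. intro E. apply H. symmetry. exact E.
Qed.

Lemma concl_iii n k w : 1 <= k <= n -> (exists p R, ctx n (size w) (fun i => nth (0,false) w i) p R) ->
  ~ prefix (rcons (t_upto k) (Tbar k)) w.
Proof.
  intros Hk [p [R C]] Hp. destruct (prefix_facts _ _ Hp) as [Hs Hn]. unfold letter in *.
  rewrite size_rcons t_upto_size in Hs Hn.
  apply (part3 C k Hk); [lia| |].
  - intros i Hi. simpl. rewrite Hn; [|lia]. rewrite rcons_nth; [|rewrite t_upto_size; lia].
    rewrite t_upto_size. destruct (Nat.eqb_spec i (k-1)); [lia|]. apply t_upto_nth. lia.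
  - simpl. rewrite Hn; [|lia]. rewrite rcons_nth; [|rewrite t_upto_size; lia].
    rewrite t_upto_size Nat.eqb_refl. reflexivity.
Qed.

Lemma concl_ii n k w : 1 <= k <= n -> (exists p R, ctx n (size w) (fun i => nth (0,false) w i) p R) ->
  prefix (rcons (tbar_down n k) (T k)) w -> w = tbar_down n k ++ T k :: t_up n k.
Proof.
  intros Hk [p [R C]] Hp. destruct (prefix_facts _ _ Hp) as [Hs Hn]. unfold letter in *.
  rewrite size_rcons tbar_down_size in Hs Hn.
  destruct (part2 C k (n-k) Hk (Logic.eq_refl _) ltac:(lia)) as [Hm Hf].
  - intros i Hi. simpl. rewrite Hn; [|lia]. rewrite rcons_nth; [|rewrite tbar_down_size; lia].
    rewrite tbar_down_size. destruct (Nat.eqb_spec i (n-k)); [lia|]. apply tbar_down_nth. lia.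
  - simpl. rewrite Hn; [|lia]. rewrite rcons_nth; [|rewrite tbar_down_size; lia].
    rewrite tbar_down_size Nat.eqb_refl. reflexivity.
  - apply (eq_from_nth (x0:=(0,false))).
    + rewrite size_cat tbar_down_size. simpl. rewrite t_up_size. natc. lia.
    + intros i Hi. move/ssrnat.ltP: Hi => Hi. unfold letter in *. simpl in Hf. rewrite Hf; [|lia].
      rewrite nth_cat tbar_down_size. unfold fex.
      destruct (Nat.ltb_spec i (n-k)) as [h|h].
      * case: ssrnat.ltP => h2; [|lia]. rewrite tbar_down_nth; auto.
      * case: ssrnat.ltP => h2; [lia|].
        destruct (Nat.eqb_spec i (n-k)) as [e|e].
        -- subst. rewrite ssrnat.subnn. unfold T. simpl. f_equal. lia.
        -- assert (E : ssrnat.subn i (n-k) = S (i - (n-k) - 1)) by (natc; lia).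
           rewrite E. simpl. rewrite t_up_nth; [f_equal; lia|].
           rewrite Hm in Hi. lia.
Qed.

From mathcomp Require Import all_boot.

Theorem propositionA (n k : nat) (w : seq letter) :
  all (valid_letter n) w -> reduced w -> planar_word n w ->
  1 <= k <= n ->
  [/\ squarefree w,
      ~ (prefix (rcons (tbar_down n k) (T k)) w /\
         w <> tbar_down n k ++ T k :: t_up n k) &
      ~ prefix (rcons (t_upto k) (Tbar k)) w].
Proof.
  move=> Hall Hred Hpl /andP [/leP Hk1 /leP Hk2].
  have B := bridge n w Hall Hred Hpl.
  split.
  - exact (concl_sq n w B).
  - move=> [Hp Hne]. apply Hne. exact (concl_ii n k w (conj Hk1 Hk2) B Hp).
  - exact (concl_iii n k w (conj Hk1 Hk2) B).
Qed.
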